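(* Let $X$ be a hyperbolic approximation of a metric space $Z$, with vertex set $V$. Assume that for some $v,v'\in V$ there is a vertex $v''\in V$ with $l(v'')\le l(v)$, $l(v'')\le l(v')$, and such that $B(v'')$ intersects both $B(v)$ and $B(v')$. Then there exists a cone point $w$ of $\{v,v',v''\}$ with $l(w)=l(v'')-1$.
   Context: Hyperbolic approximation: let $(Z,d)$ be a metric space and fix $r$ with $0<r\le1/6$. For every $k\in\mathbb{Z}$ choose a maximal $r^k$-separated set $V_k\subset Z$ (distinct points at distance $\ge r^k$, maximal with this property). For $v\in V_k$ let $B(v)$ be the ball in $Z$ of radius $2r^k$ centred at $v$, $\bar B(v)$ the closed ball. The vertex set $V$ consists, for each $k$, of the balls $B(v)$, $v\in V_k$ (equal balls from the same level give the same vertex; equal balls at different levels are different vertices); a vertex from level $k$ has level $l(v)=k$. Two vertices are joined by an edge iff they are on the same level and their closed balls intersect (horizontal edge), or they are on neighbouring levels $k,k+1$ and the ball of the level-$(k+1)$ vertex is contained in the ball of the level-$k$ vertex (radial edge). $X$ carries the path metric with all edges of length $1$. A radial geodesic is an edge path all of whose edges are radial and along which the level function is monotone. For $V'\subset V$, a vertex $u$ is a cone point of $V'$ if $l(u)\le\inf_{v\in V'}l(v)$ and every $v\in V'$ is connected to $u$ by a radial geodesic. *)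

(* Defs.v *)
From Stdlib Require Import Reals ZArith List.
Open Scope R_scope.
Set Implicit Arguments.

Section HA.
Variable T : Type.
Variable d : T -> T -> R.

Definition is_metric : Prop :=
  (forall x y, 0 <= d x y) /\ (forall x y, d x y = 0 <-> x = y) /\
  (forall x y, d x y = d y x) /\ (forall x y z, d x z <= d x y + d y z).

Definition open_ball (v : T) (rad : R) : T -> Prop := fun x => d v x < rad.

Definition separated (eps : R) (S : T -> Prop) : Prop :=
  forall x y, S x -> S y -> x <> y -> eps <= d x y.

Definition maximal_separated (eps : R) (S : T -> Prop) : Prop :=
  separated eps S /\
  forall S' : T -> Prop, (forall x, S x -> S' x) -> separated eps S' ->
    forall x, S' x -> S x.

(* A vertex: a level k together with a ball (a subset of T).  Equal balls at
   the same level are the same vertex; equal balls at different levels are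
   different vertices. *)
Record vertex := mkVertex { lev : Z ; vball : T -> Prop }.

Variable r : R.
Variable Vk : Z -> T -> Prop.  (* the chosen maximal r^k-separated sets V_k *)

Definition is_vertex (w : vertex) : Prop :=
  exists v, Vk (lev w) v /\ vball w = open_ball v (2 * powerRZ r (lev w)).

Definition incl (A B : T -> Prop) : Prop := forall x, A x -> B x.
Definition intersects (A B : T -> Prop) : Prop := exists x, A x /\ B x.

Definition radial_edge (a b : vertex) : Prop :=
  (lev b = (lev a + 1)%Z /\ incl (vball b) (vball a)) \/
  (lev a = (lev b + 1)%Z /\ incl (vball a) (vball b)).

Fixpoint chain (Rel : vertex -> vertex -> Prop) (x : vertex) (l : list vertex)
  : Prop :=
  match l with
  | nil => True
  | y :: l' => Rel x y /\ chain Rel y l'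
  end.

Definition radial_geodesic_between (a b : vertex) : Prop :=
  exists p : list vertex,
    Forall is_vertex (a :: p) /\
    chain radial_edge a p /\
    (chain (fun x y => (lev x <= lev y)%Z) a p \/
     chain (fun x y => (lev y <= lev x)%Z) a p) /\
    last p a = b.

Definition cone_point (u : vertex) (S : vertex -> Prop) : Prop :=
  is_vertex u /\
  (forall v, S v -> (lev u <= lev v)%Z) /\
  (forall v, S v -> radial_geodesic_between v u).

End HA.

(* Main.v *)
Require Import Defs.
From Stdlib Require Import Reals ZArith List Lra Lia Classical.
Open Scope R_scope.

Lemma pw_step (r : R) (Hr : 0 < r) (j : Z) : powerRZ r j = r * powerRZ r (j - 1).
Proof.
  replace j with (1 + (j - 1))%Z at 1 by lia.
  rewrite powerRZ_add by lra. simpl. ring.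
Qed.

Lemma pw_mono (r : R) (Hr : 0 < r <= 1) (j m : Z) : (j <= m)%Z ->
  powerRZ r m <= powerRZ r j.
Proof.
  intros H. replace m with (j + Z.of_nat (Z.to_nat (m - j)))%Z by lia.
  rewrite powerRZ_add by lra. rewrite <- pow_powerRZ.
  assert (0 < powerRZ r j) by (apply powerRZ_lt; lra).
  assert (r ^ Z.to_nat (m - j) <= 1).
  { rewrite <- (pow1 (Z.to_nat (m - j))). apply pow_incr. lra. }
  nra.
Qed.

Lemma near_point (T : Type) (d : T -> T -> R) (Hd : is_metric d)
  (eps : R) (He : 0 < eps) (S : T -> Prop) (HS : maximal_separated d eps S)
  (q : T) : exists y, S y /\ d q y < eps.
Proof.
  destruct Hd as [H0 [H1 [H2 H3]]].
  apply NNPP. intro Hn.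
  assert (Hall : forall y, S y -> eps <= d q y).
  { intros y Sy. destruct (Rlt_le_dec (d q y) eps) as [h|h]; auto.
    exfalso; apply Hn; eauto. }
  destruct HS as [Hsep Hmax].
  assert (Sq : S q).
  { apply (Hmax (fun x => S x \/ x = q)); auto.
    intros x y [Sx|ex] [Sy|ey] hne.
    - auto.
    - subst. rewrite H2. auto.
    - subst. auto.
    - subst. congruence. }
  specialize (Hall q Sq). assert (d q q = 0) by (apply H1; auto). lra.
Qed.

Lemma last_indep (A : Type) (p : list A) (a b c : A) :
  last (c :: p) a = last (c :: p) b.
Proof. revert c; induction p as [|x p IH]; intros c; simpl; auto.
  specialize (IH x). simpl in IH. destruct p; auto. Qed.

Lemma chain_up (T : Type) (d : T -> T -> R) (Hd : is_metric d)
  (r : R) (Hr : 0 < r <= 1/6) (Vk : Z -> T -> Prop)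
  (HV : forall k : Z, maximal_separated d (powerRZ r k) (Vk k))
  (c : T) (m k : Z) (w : vertex T) (Hw : is_vertex d r Vk w)
  (Hlw : lev w = (k - 1)%Z)
  (Hfin : forall y', d c y' + 2 * powerRZ r m <= 2 * powerRZ r k ->
      Defs.incl (open_ball d y' (2 * powerRZ r k)) (vball w)) :
  forall n j y, Vk j y -> d c y + 2 * powerRZ r m <= 2 * powerRZ r j ->
    (j <= m)%Z -> (j - Z.of_nat n = k)%Z ->
    let a := mkVertex j (open_ball d y (2 * powerRZ r j)) in
    exists p : list (vertex T), Forall (is_vertex d r Vk) (a :: p) /\
    chain (@radial_edge T) a p /\ chain (fun x y => (lev y <= lev x)%Z) a p /\
    last p a = w.
Proof.
  destruct Hd as [H0 [H1 [H2 H3]]].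
  induction n as [|n IH]; intros j y Vy Hinv Hjm Hjn.
  - simpl in Hjn. replace j with k in * by lia.
    exists (w :: nil). split; [|split; [|split]].
    + constructor. exists y. simpl. auto. constructor; auto.
    + simpl. split; auto. right. simpl. split; [lia|]. apply Hfin; auto.
    + simpl. split; auto. lia.
    + reflexivity.
  - assert (Hpos : 0 < powerRZ r (j - 1)) by (apply powerRZ_lt; lra).
    destruct (@near_point T d (conj H0 (conj H1 (conj H2 H3))) _ Hpos _ (HV (j-1)%Z) c)
      as [y1 [Vy1 Hy1]].
    assert (Hmj : powerRZ r m <= powerRZ r j) by (apply pw_mono; lra || lia).
    assert (Hmpos : 0 < powerRZ r m) by (apply powerRZ_lt; lra).
    pose proof (pw_step r (proj1 Hr) j) as Hst.
    assert (Hinv1 : d c y1 + 2 * powerRZ r m <= 2 * powerRZ r (j - 1)) by nra.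
    destruct (IH (j - 1)%Z y1 Vy1 Hinv1 ltac:(lia) ltac:(lia)) as [p [Hf [Hc [Hm Hl]]]].
    exists (mkVertex (j - 1) (open_ball d y1 (2 * powerRZ r (j - 1))) :: p).
    split; [|split; [|split]].
    + constructor; auto. exists y. simpl. auto.
    + simpl. split; auto. right. simpl. split; [lia|].
      intros z Hz. unfold open_ball in *.
      pose proof (H3 y1 c z). pose proof (H3 c y z). rewrite (H2 y1 c) in *. nra.
    + simpl. split; [lia|]. exact Hm.
    + destruct p as [|v p]; [simpl in *; auto|].
      change (last (v :: p) (mkVertex (j - 1) (open_ball d y1 (2 * powerRZ r (j - 1)))) = w) in Hl.
      simpl (last (_ :: v :: p) _). rewrite <- Hl. apply last_indep.
Qed.
Lemma to_w (T : Type) (d : T -> T -> R) (Hd : is_metric d)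
  (r : R) (Hr : 0 < r <= 1/6) (Vk : Z -> T -> Prop)
  (HV : forall k : Z, maximal_separated d (powerRZ r k) (Vk k))
  (k : Z) (c'' x : T) (Hx : d c'' x < powerRZ r (k - 1)) (Vx : Vk (k - 1)%Z x)
  (t : vertex T) (Ht : is_vertex d r Vk t) (Hlt : (k <= lev t)%Z)
  (Hi : intersects (open_ball d c'' (2 * powerRZ r k)) (vball t)) :
  radial_geodesic_between d r Vk t (mkVertex (k - 1) (open_ball d x (2 * powerRZ r (k - 1)))).
Proof.
  destruct t as [m B]. destruct Ht as [c [Vc HB]]. simpl in *. subst B.
  destruct Hi as [p [Hp1 Hp2]]. unfold open_ball in Hp1, Hp2.
  pose proof Hd as Hd'. destruct Hd' as [H0 [H1 [H2 H3]]].
  assert (Hcc : d c c = 0) by (apply H1; auto).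
  pose proof (pw_step r (proj1 Hr) k) as Hst.
  assert (Hpk : 0 < powerRZ r (k - 1)) by (apply powerRZ_lt; lra).
  assert (Hfin : forall y', d c y' + 2 * powerRZ r m <= 2 * powerRZ r k ->
      Defs.incl (open_ball d y' (2 * powerRZ r k))
        (vball (mkVertex (k - 1) (open_ball d x (2 * powerRZ r (k - 1)))))).
  { intros y' Hy' z Hz. unfold open_ball in *. simpl.
    pose proof (H3 x c'' z). pose proof (H3 c'' p z). pose proof (H3 p c z).
    pose proof (H3 c y' z). rewrite (H2 x c'') in *. rewrite (H2 p c) in *. nra. }
  destruct (@chain_up T d Hd r Hr Vk HV c m k
     (mkVertex (k - 1) (open_ball d x (2 * powerRZ r (k - 1))))
     ltac:(exists x; simpl; auto) eq_refl Hfin (Z.to_nat (m - k)) m c Vc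
     ltac:(lra) ltac:(lia) ltac:(lia)) as [q [Hf [Hc [Hm Hl]]]].
  exists q. split; auto.
Qed.

Theorem lemma3p9 (T : Type) (d : T -> T -> R) (Hd : is_metric d)
  (r : R) (Hr : 0 < r <= 1/6) (Vk : Z -> T -> Prop)
  (HV : forall k : Z, maximal_separated d (powerRZ r k) (Vk k))
  (v v' v'' : vertex T)
  (Hv : is_vertex d r Vk v) (Hv' : is_vertex d r Vk v')
  (Hv'' : is_vertex d r Vk v'')
  (Hl : (lev v'' <= lev v)%Z) (Hl' : (lev v'' <= lev v')%Z)
  (Hi : intersects (vball v'') (vball v))
  (Hi' : intersects (vball v'') (vball v')) :
  exists w : vertex T,
    cone_point d r Vk w (fun x => x = v \/ x = v' \/ x = v'') /\
    lev w = (lev v'' - 1)%Z.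
Proof.
  destruct Hv'' as [c'' [Vc'' Hb'']].
  assert (Hpk : 0 < powerRZ r (lev v'' - 1)) by (apply powerRZ_lt; lra).
  destruct (@near_point T d Hd _ Hpk _ (HV (lev v'' - 1)%Z) c'') as [x [Vx Hx]].
  exists (mkVertex (lev v'' - 1) (open_ball d x (2 * powerRZ r (lev v'' - 1)))).
  split; [|reflexivity].
  assert (Hgen : forall t, is_vertex d r Vk t -> (lev v'' <= lev t)%Z ->
     intersects (vball v'') (vball t) ->
     radial_geodesic_between d r Vk t
       (mkVertex (lev v'' - 1) (open_ball d x (2 * powerRZ r (lev v'' - 1))))).
  { intros t Ht Hlt Hit. apply (@to_w T d Hd r Hr Vk HV _ c'' x Hx Vx t Ht Hlt). rewrite <- Hb''. exact Hit. }
  assert (Hself : intersects (vball v'') (vball v'')).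
  { exists c''. rewrite Hb''. unfold open_ball.
    destruct Hd as [_ [H1 _]]. rewrite (proj2 (H1 c'' c'') eq_refl).
    assert (0 < powerRZ r (lev v'')) by (apply powerRZ_lt; lra). lra. }
  assert (Hv''' : is_vertex d r Vk v'') by (exists c''; auto).
  split; [|split].
  - exists x. simpl. auto.
  - simpl. intros u [ -> | [ -> | -> ] ]; lia.
  - intros u [ -> | [ -> | -> ] ]; apply Hgen; auto; lia.
Qed.
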